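(* Let $L\subseteq\Sigma^\omega$ be a language recognised by some deterministic coBüchi automaton, and let $\mathcal{A}_{\min}$ be a nice, safe minimal and safe centralised history-deterministic coBüchi automaton recognising $L$, with safe components $\mathcal{S}_1,\dots,\mathcal{S}_k$ (state sets $S_i$, transition sets $\Delta_i$). Let $R_1,\dots,R_m$ be the distinct residuals of $L$, with $R_1=L$, and for each $j$ let $Q^{R_j}$ be the set of states $q$ of $\mathcal{A}_{\min}$ whose language (with $q$ as initial state) is $R_j$. Let $n_j=\max_{1\le i\le k}|S_i\cap Q^{R_j}|$, let $P_j=\{p_j^1,\dots,p_j^{n_j}\}$ be pairwise disjoint sets, and $Q=P_1\cup\dots\cup P_m$. Let $\mathcal{A}_{\mathrm{gen}}$ be the generalised coBüchi automaton with states $Q$, initial state $p_1^1$, colours $\{1,\dots,k\}$, and transitions: for every transition $(q,a,q')$ of $\mathcal{A}_{\min}$ with $q\in Q^{R_j}$ and $q'\in Q^{R_{j'}}$, all triples $(p,a,p')$ with $p\in P_j$, $p'\in P_{j'}$. For each $i$, let $\phi_i:S_i\to Q$ be an injective map with $\phi_i(q)\in P_j$ whenever $q\in Q^{R_j}$, extended to transitions by $\phi_i(q,a,q')=(\phi_i(q),a,\phi_i(q'))$, and label each transition $e$ of $\mathcal{A}_{\mathrm{gen}}$ by $\mathrm{col}(e)=\{i : \text{there is no } e'\in\Delta_i \text{ with } \phi_i(e')=e\}$. Then $\mathcal{A}_{\mathrm{gen}}$ is history-deterministic and $\mathcal{L}(\mathcal{A}_{\mathrm{gen}})=L$.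
   Context: An automaton is a tuple $(Q,\Sigma,q_{\mathrm{init}},\Delta,\Gamma,\mathrm{col},W)$ with finite state set, finite input alphabet $\Sigma$, initial state, transitions $\Delta\subseteq Q\times\Sigma\times Q$, output alphabet $\Gamma$, labelling $\mathrm{col}:\Delta\to\Gamma$, acceptance condition $W\subseteq\Gamma^\omega$. A run on $w=a_1a_2\cdots$ is a sequence $(q_0,a_1,q_1)(q_1,a_2,q_2)\cdots$ of transitions with $q_0=q_{\mathrm{init}}$, accepting if its label sequence is in $W$; $\mathcal{L}(\mathcal{A})$ is the set of words with an accepting run. With a finite colour set $C$ and $\Gamma=2^C$, generalised coBüchi means $W=\{x : \text{some } c\in C \text{ occurs in only finitely many letters of } x\}$; a coBüchi automaton is the case $C=\{1\}$, its coBüchi transitions being those labelled $\{1\}$. A resolver is a map $\sigma:\Sigma^+\to\Delta$ such that for every $w=a_0a_1\cdots$, $\sigma(a_0)\sigma(a_0a_1)\cdots$ is a run on $w$, accepting whenever $w\in\mathcal{L}(\mathcal{A})$; history-deterministic means a resolver exists. The residual of $L$ with respect to $u\in\Sigma^*$ is $u^{-1}L=\{w\in\Sigma^\omega : uw\in L\}$. For a coBüchi automaton: $\mathcal{A}_{\mathrm{safe}}$ is obtained by deleting coBüchi transitions; a safe component is a strongly connected component of $\mathcal{A}_{\mathrm{safe}}$; the safe language of $q$ is the set of words with an infinite path from $q$ in $\mathcal{A}_{\mathrm{safe}}$; two states are equivalent if the automaton started from each recognises the same language. Semantically deterministic: $(q,a,p_1),(q,a,p_2)\in\Delta$ implies $p_1,p_2$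 equivalent; normal form: transitions between different safe components are coBüchi transitions; safe deterministic: $\mathcal{A}_{\mathrm{safe}}$ deterministic; nice: all states reachable, semantically deterministic, normal form, safe deterministic. Safe centralised: equivalent states with inclusion-comparable safe languages lie in the same safe component; safe minimal: equivalent states with equal safe languages are equal. *)

(* Defs.v *)
From mathcomp Require Import all_boot.
From mathcomp Require Import boolp.
Set Implicit Arguments. Unset Strict Implicit. Unset Printing Implicit Defensive.

Section Automata.
Variable Sigma : finType.

Definition word := nat -> Sigma.
Definition language := word -> Prop.
Definition lang_eq (L1 L2 : language) := forall w, L1 w <-> L2 w.
Definition lang_sub (L1 L2 : language) := forall w, L1 w -> L2 w.

Definition prepend (u : seq Sigma) (w : word) : word :=
  fun n => if n < size u then nth (w 0) u n else w (n - size u).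
Definition residual (L : language) (u : seq Sigma) : language :=
  fun w => L (prepend u w).
Definition is_residual (L R : language) := exists u, lang_eq R (residual L u).
Definition prefix (w : word) (n : nat) : seq Sigma := mkseq w n.

Record gcba (Q C : finType) := GCBA {
  ginit : Q;
  gdelta : Q -> Sigma -> Q -> bool;
  gcol : Q -> Sigma -> Q -> {set C} }.

Section General.
Variables (Q C : finType) (A : gcba Q C).

Definition is_trans (e : Q * Sigma * Q) := gdelta A e.1.1 e.1.2 e.2.
Definition tcol (e : Q * Sigma * Q) := gcol A e.1.1 e.1.2 e.2.

Definition run_from (q : Q) (w : word) (r : nat -> Q * Sigma * Q) :=
  (r 0).1.1 = q /\
  forall n, is_trans (r n) /\ (r n).1.2 = w n /\ (r n.+1).1.1 = (r n).2.

Definition gcb_accepting (x : nat -> {set C}) :=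
  exists c : C, exists N, forall n, N <= n -> c \notin x n.

Definition accepting_run (r : nat -> Q * Sigma * Q) :=
  gcb_accepting (fun n => tcol (r n)).

Definition lang_from (q : Q) : language :=
  fun w => exists r, run_from q w r /\ accepting_run r.
Definition lang : language := lang_from (ginit A).

(** resolver sigma : Sigma^+ -> Delta (value on the empty word is irrelevant) *)
Definition resolver (sigma : seq Sigma -> Q * Sigma * Q) :=
  forall w : word,
    run_from (ginit A) w (fun n => sigma (prefix w n.+1)) /\
    (lang w -> accepting_run (fun n => sigma (prefix w n.+1))).
Definition history_deterministic := exists sigma, resolver sigma.

Definition deterministic :=
  forall q a p1 p2, gdelta A q a p1 -> gdelta A q a p2 -> p1 = p2.
End General.

(** coBuchi automata: colour set C = {1}, represented by unit *)
Section CoBuchi.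
Variables (Q : finType) (A : gcba Q unit).

Definition cobuchi_trans q a q' := gdelta A q a q' && (tt \in gcol A q a q').
Definition safe_trans q a q' := gdelta A q a q' && (tt \notin gcol A q a q').
Definition safe_rel : rel Q := [rel q q' | [exists a, safe_trans q a q']].
Definition same_safe_comp (q p : Q) :=
  connect safe_rel q p && connect safe_rel p q.
Definition safe_comp_of (q : Q) : {set Q} := [set p | same_safe_comp q p].
Definition is_safe_comp (S : {set Q}) := exists q, S = safe_comp_of q.
Definition safe_comp_trans (S : {set Q}) q a q' :=
  [&& safe_trans q a q', q \in S & q' \in S].

Definition safe_lang (q : Q) : language :=
  fun w => exists r, run_from A q w r /\ forall n, tt \notin tcol A (r n).

Definition equiv_states (p q : Q) := lang_eq (lang_from A p) (lang_from A q).

Definition all_reachable :=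
  forall q, connect [rel x y | [exists a, gdelta A x a y]] (ginit A) q.
Definition semantically_deterministic :=
  forall q a p1 p2, gdelta A q a p1 -> gdelta A q a p2 -> equiv_states p1 p2.
Definition normal_form :=
  forall q a q', gdelta A q a q' -> ~~ same_safe_comp q q' -> cobuchi_trans q a q'.
Definition safe_deterministic :=
  forall q a p1 p2, safe_trans q a p1 -> safe_trans q a p2 -> p1 = p2.
Definition nice :=
  [/\ all_reachable, semantically_deterministic, normal_form & safe_deterministic].

Definition safe_centralised :=
  forall p q, equiv_states p q ->
    (lang_sub (safe_lang p) (safe_lang q) \/ lang_sub (safe_lang q) (safe_lang p)) ->
    same_safe_comp p q.
Definition safe_minimal :=
  forall p q, equiv_states p q -> lang_eq (safe_lang p) (safe_lang q) -> p = q.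
End CoBuchi.

Section Construction.
Variables (Qm : finType) (Amin : gcba Qm unit).
Variables (m : nat) (R : 'I_m -> language).
Variables (k : nat) (Sc : 'I_k -> {set Qm}).
(** Q is partitioned into the P_j = blk^-1 j; q0 = p_1^1 *)
Variables (Q : finType) (blk : Q -> 'I_m) (q0 : Q).
Variable phi : 'I_k -> Qm -> Q.

Definition QR (j : 'I_m) : {set Qm} :=
  [set q | `[< lang_eq (lang_from Amin q) (R j) >]].
Definition nR (j : 'I_m) : nat := \max_(i < k) #|Sc i :&: QR j|.

Definition gen_delta (p : Q) (a : Sigma) (p' : Q) : bool :=
  [exists q, exists q', [&& gdelta Amin q a q', q \in QR (blk p) & q' \in QR (blk p')]].
Definition gen_col (p : Q) (a : Sigma) (p' : Q) : {set 'I_k} :=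
  [set i | ~~ [exists q, exists q',
     [&& safe_comp_trans Amin (Sc i) q a q', phi i q == p & phi i q' == p']]].
Definition A_gen : gcba Q 'I_k := GCBA q0 gen_delta gen_col.
End Construction.
End Automata.

(* Main.v *)
Require Import Defs.
From mathcomp Require Import all_boot.
From mathcomp Require Import boolp.
From mathcomp Require Import zify.
Set Implicit Arguments. Unset Strict Implicit. Unset Printing Implicit Defensive.

Lemma prepend_nil (S : finType) (w : word S) : prepend [::] w = w.
Proof. by apply: funext => n; rewrite /prepend /= subn0. Qed.

Lemma prepend1_0 (S : finType) (a : S) (w : word S) : prepend [::a] w 0 = a.
Proof. by []. Qed.

Lemma prepend1_S (S : finType) (a : S) (w : word S) n : prepend [::a] w n.+1 = w n.
Proof. by rewrite /prepend /= subSS subn0. Qed.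

Lemma prepend_rcons (S : finType) (u : seq S) a (w : word S) :
  prepend (rcons u a) w = prepend u (prepend [::a] w).
Proof.
apply: funext => n; rewrite /prepend /= size_rcons nth_rcons.
case: (ltngtP n (size u)) => h.
- by rewrite ltnS ltnW //; apply: set_nth_default.
- have h1 : (n < (size u).+1) = false by lia.
  have h2 : (n - size u < 1) = false. lia.
  rewrite h1 h2; congr w. lia.
- by rewrite h ltnSn subnn.
Qed.

Lemma prepend_prefix (S : finType) (w : word S) N :
  prepend (Defs.prefix w N) (fun n => w (N + n)) = w.
Proof.
apply: funext => n; rewrite /prepend size_mkseq.
case: ltnP => h; first by rewrite nth_mkseq.
by rewrite subnKC.
Qed.

Lemma residual_eq (S : finType) (L1 L2 : language S) u :
  lang_eq L1 L2 -> lang_eq (residual L1 u) (residual L2 u).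
Proof. by move=> h w; apply: h. Qed.

Lemma residual_rcons (S : finType) (L : language S) u a :
  lang_eq (residual L (rcons u a)) (residual (residual L u) [::a]).
Proof. by move=> w; rewrite /residual prepend_rcons. Qed.

Lemma acc_eventually (S : finType) (Q C : finType) (A : gcba S Q C) r r' N :
  (forall n, tcol A (r' (N + n)) = tcol A (r n)) ->
  accepting_run A r -> accepting_run A r'.
Proof.
move=> he [c [M hM]]; exists c, (N + M) => n hn.
have -> : n = N + (n - N) by lia.
rewrite he; apply: hM; lia.
Qed.

Lemma acc_tail (S : finType) (Q C : finType) (A : gcba S Q C) r :
  accepting_run A r -> accepting_run A (fun n => r n.+1).
Proof. by move=> [c [M hM]]; exists c, M => n hn; apply: hM; lia. Qed.

Lemma lang_step (S : finType) (Q : finType) (A : gcba S Q unit) :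
  semantically_deterministic A -> forall q a q', gdelta A q a q' ->
  lang_eq (lang_from A q') (residual (lang_from A q) [::a]).
Proof.
move=> sd q a q' hq w; split.
- move=> [r [[r0 hr] acc]].
  exists (fun n => if n is n'.+1 then r n' else (q, a, q')); split.
  + split => // -[|n] /=.
    * by rewrite prepend1_0 r0.
    * by rewrite prepend1_S; case: (hr n).
  + by apply: (acc_eventually (N := 1) _ acc).
- move=> [r [[r0 hr] acc]].
  have [t0 [l0 c0]] := hr 0.
  have hd : gdelta A q a (r 0).2.
    by move: t0; rewrite /is_trans r0 l0 prepend1_0.
  have : lang_from A (r 0).2 w.
    exists (fun n => r n.+1); split.
    + split; first by case: (hr 0).
      by move=> n; have [? [? ?]] := hr n.+1; rewrite -(prepend1_S a w); split.
    + by apply: acc_tail.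
  by move/(sd _ _ _ _ hd hq).
Qed.

Lemma reach_res (S : finType) (Q : finType) (A : gcba S Q unit) (L : language S) :
  semantically_deterministic A -> all_reachable A -> lang_eq (lang A) L ->
  forall q, exists u, lang_eq (lang_from A q) (residual L u).
Proof.
move=> sd reach hL q; move: (reach q) => /connectP [p pth ->].
have h0 : exists u, lang_eq (lang_from A (ginit A)) (residual L u).
  by exists [::] => w; rewrite /residual prepend_nil; apply: hL.
elim: p (ginit A) h0 pth => [|y p IH] x hx //= /andP [/existsP [a ha] hp].
apply: IH hp; case: hx => u hu; exists (rcons u a) => w.
rewrite (lang_step sd ha w) (residual_rcons L u a w).
by apply: residual_eq.
Qed.

Lemma comp_refl (S : finType) (Q : finType) (A : gcba S Q unit) q :
  q \in safe_comp_of A q.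
Proof. by rewrite inE /same_safe_comp connect0. Qed.

Lemma comp_eq (S : finType) (Q : finType) (A : gcba S Q unit) p q :
  same_safe_comp A p q -> safe_comp_of A p = safe_comp_of A q.
Proof.
move=> /andP [hpq hqp]; apply/setP => x; rewrite !inE /same_safe_comp.
apply/andP/andP => -[h1 h2]; split.
- exact: connect_trans hqp h1.
- exact: connect_trans h2 hpq.
- exact: connect_trans hpq h1.
- exact: connect_trans h2 hqp.
Qed.
Theorem proposition23 (Sigma : finType) (L : language Sigma)
  (Qm : finType) (Amin : gcba Sigma Qm unit)
  (k : nat) (Sc : 'I_k -> {set Qm})
  (m : nat) (R : 'I_m -> language Sigma) (j1 : 'I_m)
  (Q : finType) (blk : Q -> 'I_m) (q0 : Q)
  (phi : 'I_k -> Qm -> Q) :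
  (exists (QD : finType) (D : gcba Sigma QD unit),
      deterministic D /\ lang_eq (lang D) L) ->
  history_deterministic Amin ->
  lang_eq (lang Amin) L ->
  nice Amin -> safe_minimal Amin -> safe_centralised Amin ->
  (* S_1, ..., S_k enumerate the safe components without repetition *)
  injective Sc ->
  (forall i, is_safe_comp Amin (Sc i)) ->
  (forall S, is_safe_comp Amin S -> exists i, Sc i = S) ->
  (* R_1, ..., R_m are the distinct residuals of L, R_{j1} = L *)
  (forall j j', lang_eq (R j) (R j') -> j = j') ->
  (forall j, is_residual L (R j)) ->
  (forall u, exists j, lang_eq (residual L u) (R j)) ->
  lang_eq (R j1) L ->
  (* Q is the disjoint union of the P_j = blk^-1(j), |P_j| = n_j, q0 in P_{j1} *)
  (forall j, #|[set p | blk p == j]| = nR Amin R Sc j) ->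
  blk q0 = j1 ->
  (* the maps phi_i : S_i -> Q *)
  (forall i, {in Sc i &, injective (phi i)}) ->
  (forall i j q, q \in Sc i -> q \in QR Amin R j -> blk (phi i q) = j) ->
  history_deterministic (A_gen Amin R Sc blk q0 phi) /\
  lang_eq (lang (A_gen Amin R Sc blk q0 phi)) L.
Proof.
move=> _ [sig hsig] hL [reach sd nf _] _ _ Scinj Sccomp Scall _ _ hresj hj1 _ hq0 phiinj phiblk.
have hres : forall q, exists j, q \in QR Amin R j.
  move=> q; have [u hu] := reach_res sd reach hL q.
  have [j hj] := hresj u; exists j; rewrite inE; apply/asboolP => w.
  by rewrite hu hj.
have QRP : forall q j, q \in QR Amin R j -> lang_eq (lang_from Amin q) (R j).
  by move=> q j; rewrite inE => /asboolP.
pose c q := [pick i | Sc i == safe_comp_of Amin q].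
have hc : forall q, exists i, c q = Some i /\ Sc i = safe_comp_of Amin q.
  move=> q; rewrite /c; case: pickP => [i /eqP hi|hn]; first by exists i.
  have [i hi] := Scall _ (ex_intro _ q erefl).
  by move: (hn i); rewrite hi eqxx.
pose f q := if c q is Some i then phi i q else q0.
have hf : forall q, q \in QR Amin R (blk (f q)).
  move=> q; have [i [ci hi]] := hc q; have [j hj] := hres q.
  rewrite /f ci (phiblk i j q) // hi; exact: comp_refl.
have inv : forall w r, run_from (A_gen Amin R Sc blk q0 phi) q0 w r ->
    forall n, lang_eq (R (blk (r n).1.1)) (residual L (Defs.prefix w n)).
  move=> w r [r0 hr]; elim => [|n IH].
    by rewrite r0 hq0 /Defs.prefix /= => x; rewrite /residual prepend_nil.
  have [ht [hl hc1]] := hr n; rewrite hc1.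
  move: ht; rewrite /is_trans /= /gen_delta => /existsP [q /existsP [q' /and3P [hd hq hq']]].
  move=> x; rewrite -(QRP _ _ hq' x) (lang_step sd hd x) /residual (QRP _ _ hq _).
  rewrite (IH _) /residual /Defs.prefix mkseqS -hl prepend_rcons //.
have sub : forall w, lang (A_gen Amin R Sc blk q0 phi) w -> L w.
  move=> w [r [hrun [i [N hN]]]].
  have hI := inv w r hrun; case: hrun => r0 hr.
  have hex : forall n, exists qq : Qm * Qm,
      [&& safe_comp_trans Amin (Sc i) qq.1 (r (N + n)).1.2 qq.2,
          phi i qq.1 == (r (N + n)).1.1 & phi i qq.2 == (r (N + n)).2].
    move=> n; have := hN (N + n) (leq_addr _ _).
    rewrite /tcol /= /gen_col inE negbK => /existsP [q /existsP [q' hqq]].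
    by exists (q, q').
  pose g n := xchoose (hex n).
  have hg : forall n, _ := fun n => xchooseP (hex n).
  pose s n := ((g n).1, w (N + n), (g n).2).
  have hs : run_from Amin (g 0).1 (fun n => w (N + n)) s.
    split => // n; have /and3P [/and3P [/andP [ht _] h1 h2] e1 e2] := hg n.
    have [_ [hl hc1]] := hr (N + n).
    split; first by rewrite /is_trans /= -hl.
    split => //=.
    have /and3P [/and3P [_ h1' _] e1' _] := hg n.+1.
    apply: (phiinj i) => //; rewrite (eqP e1') (eqP e2) addnS hc1 //.
  have hsafe : forall n, tt \notin tcol Amin (s n).
    move=> n; have /and3P [/and3P [/andP [_ ht] _ _] _ _] := hg n.
    by have [_ [hl _]] := hr (N + n); rewrite /tcol /= -hl.
  have hl0 : lang_from Amin (g 0).1 (fun n => w (N + n)).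
    by exists s; split => //; exists tt, 0 => n _; apply: hsafe.
  have [j hj] := hres (g 0).1.
  have /and3P [/and3P [_ h1 _] e1 _] := hg 0.
  have hbj := phiblk i j _ h1 hj; rewrite (eqP e1) addn0 in hbj.
  have := (QRP _ _ hj _).1 hl0; rewrite -hbj (hI N) /residual.
  by rewrite prepend_prefix.
pose sig' (u : seq Sigma) : Q * Sigma * Q :=
  let e := sig u in ((if size u <= 1 then q0 else f e.1.1, e.1.2), f e.2).
have hres' : forall w, run_from (A_gen Amin R Sc blk q0 phi) q0 w (fun n => sig' (Defs.prefix w n.+1)) /\
   (L w -> accepting_run (A_gen Amin R Sc blk q0 phi) (fun n => sig' (Defs.prefix w n.+1))).
  move=> w; pose e n := sig (Defs.prefix w n.+1).
  have [[e0 he] hacc] := hsig w.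
  have hsz : forall n, size (Defs.prefix w n.+1) = n.+1 by move=> n; rewrite size_mkseq.
  have hfst : forall n, (sig' (Defs.prefix w n.+2)).1.1 = f (e n.+1).1.1.
    by move=> n; rewrite /sig' (hsz n.+1).
  split.
    split; first by rewrite /sig' (hsz 0).
    move=> n; have [ht [hl hc1]] := he n.
    split; last split.
    - rewrite /is_trans /= /gen_delta; apply/existsP; exists (e n).1.1.
      apply/existsP; exists (e n).2; rewrite hf andbT; apply/andP; split => //.
      case: n {ht hl hc1} => [|n]; rewrite size_map size_iota /=; first last.
        exact: hf.
      rewrite hq0 e0.
      rewrite inE; apply/asboolP => x; rewrite hj1; split; [exact: (hL x).1|exact: (hL x).2].
    - by [].
    - by rewrite (hfst n) /e; move: hc1 => /= ->.
  move=> /(hL w).2 /hacc [[] [N hN]].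
  have hchain : forall n, (e n.+1).1.1 = (e n).2 by move=> n; have [_ [_ ->]] := he n.
  have hsafe : forall n, N <= n -> same_safe_comp Amin (e n).1.1 (e n).2.
    move=> n hn; have hn' := hN n hn; have [ht _] := he n.
    case hs: (same_safe_comp _ _ _) => //.
    have := nf _ _ _ ht (negbT hs); rewrite /cobuchi_trans => /andP [_ hin].
    by move: hn'; rewrite /tcol /= hin.
  have hcompm : forall t, safe_comp_of Amin (e (N + t)).1.1 = safe_comp_of Amin (e N).1.1.
    elim => [|t IH]; first by rewrite addn0.
    rewrite addnS hchain -IH; symmetry; apply: comp_eq; apply: hsafe; exact: leq_addr.
  have hcomp : forall n, N <= n -> safe_comp_of Amin (e n).1.1 = safe_comp_of Amin (e N).1.1.
    by move=> n hn; rewrite -(subnKC hn) hcompm.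
  have [i [ci hi]] := hc (e N).1.1.
  have hcn : forall n, N <= n -> c (e n).1.1 = Some i.
    move=> n hn; have [i' [ci' hi']] := hc (e n).1.1; rewrite ci'; congr Some.
    by apply: Scinj; rewrite hi' hi hcomp.
  exists i, N.+1 => n hn.
  have hn1 : N <= n by exact: ltnW.
  have hn2 : N <= n.+1 by exact: leqW.
  rewrite /sig' (hsz n).
  have -> : (n < 1) = false by lia.
  rewrite /tcol /= /gen_col inE negbK; apply/existsP; exists (e n).1.1.
  apply/existsP; exists (e n).2.
  rewrite -/(e n) /f -(hchain n) (hcn _ hn1) (hcn _ hn2) !eqxx !andbT.
  have [ht _] := he n; have hn' := hN n hn1.
  have m1 : (e n).1.1 \in Sc i by rewrite hi -(hcomp _ hn1) comp_refl.
  have m2 : (e n.+1).1.1 \in Sc i by rewrite hi -(hcomp _ hn2) comp_refl.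
  rewrite /safe_comp_trans m1 m2 !andbT /safe_trans hchain.
  apply/andP; split; [exact: ht|exact: hn'].
split.
  exists sig' => w; have [h1 h2] := hres' w; split => // /sub; exact: h2.
move=> w; split; first exact: sub.
move=> hw; have [h1 h2] := hres' w; exists (fun n => sig' (Defs.prefix w n.+1)).
by split => //; apply: h2.
Qed.
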